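(* Let $x,y,z$ be nodes of a finite, connected, unweighted, undirected graph, and suppose some node $c$ is a Condorcet winner for $\{x,y,z\}$. Then $c$ is the unique generalized median of $\{x,y,z\}$.
   Context: $d$ is the shortest-path distance. A node $c$ is a Condorcet winner for a set $S$ if for every other node $y'$, $\lvert\{u\in S: d(u,c)<d(u,y')\}\rvert > \lvert\{u\in S: d(u,y')<d(u,c)\}\rvert$. A generalized median of $\{x,y,z\}$ is a node minimizing $d(u,x)+d(u,y)+d(u,z)$ over all nodes $u$. *)

(* Defs.v *)
From mathcomp Require Import all_boot.
Set Implicit Arguments. Unset Strict Implicit. Unset Printing Implicit Defensive.

Definition simple_graph (T : finType) (e : rel T) : Prop :=
  symmetric e /\ irreflexive e.

Definition connected_graph (T : finType) (e : rel T) : Prop :=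
  forall u v : T, connect e u v.

Definition within (T : finType) (e : rel T) (n : nat) (u v : T) : bool :=
  [exists k : 'I_n.+1, exists p : k.-tuple T, path e u p && (last u p == v)].

(* Shortest-path distance: least n (< #|T|) with v reachable within n steps.
   In a connected graph this is the usual hop distance. *)
Definition dist (T : finType) (e : rel T) (u v : T) : nat :=
  find (fun n => within e n u v) (iota 0 #|T|).

Definition condorcet_winner (T : finType) (e : rel T) (S : {set T}) (c : T) : Prop :=
  forall y' : T, y' != c ->
    #|[set u in S | dist e u c < dist e u y']| > #|[set u in S | dist e u y' < dist e u c]|.

Definition median_cost (T : finType) (e : rel T) (x y z u : T) : nat :=
  dist e u x + dist e u y + dist e u z.

Definition gen_median (T : finType) (e : rel T) (x y z u : T) : Prop :=
  forall w : T, median_cost e x y z u <= median_cost e x y z w.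

(* Main.v *)
Require Import Defs.
From mathcomp Require Import all_boot.
From mathcomp Require Import zify.

Set Implicit Arguments. Unset Strict Implicit. Unset Printing Implicit Defensive.

Section D.
Variables (T : finType) (e : rel T).

Lemma withinP n u v : reflect (exists p : seq T, [/\ size p <= n, path e u p & last u p = v]) (within e n u v).
Proof.
apply: (iffP existsP).
  move=> [k /existsP [t /andP [Hp /eqP Hl]]]; exists (val t); split => //.
  by rewrite size_tuple -ltnS ltn_ord.
move=> [p [Hs Hp Hl]].
have H : size p < n.+1 by rewrite ltnS.
exists (Ordinal H); apply/existsP; exists (in_tuple p); by rewrite Hp Hl eqxx.
Qed.

Hypothesis Hsym : symmetric e.
Hypothesis Hcon : forall u v : T, connect e u v.

Lemma within_full u v : within e #|T|.-1 u v.
Proof.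
move: (Hcon u v) => /connectP [p Hp Hl].
case: (shortenP Hp) Hl => p' Hp' Hu _ Hl.
apply/withinP; exists p'; split => //.
have : size (u :: p') <= #|T| by rewrite -(card_uniqP Hu); apply: max_card.
by rewrite /=; case: #|T|.
Qed.


Lemma dist_within u v : within e (dist e u v) u v.
Proof.
have N0 : 0 < #|T| by apply/card_gt0P; exists u.
have Hh : has (fun n => within e n u v) (iota 0 #|T|).
  apply/hasP; exists #|T|.-1; last exact: within_full.
  by rewrite mem_iota; lia.
have Hf := Hh; rewrite has_find size_iota in Hf.
by have := nth_find 0 Hh; rewrite /dist nth_iota.
Qed.

Lemma dist_lt u v : dist e u v < #|T|.
Proof.
have N0 : 0 < #|T| by apply/card_gt0P; exists u.
have Hh : has (fun n => within e n u v) (iota 0 #|T|).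
  apply/hasP; exists #|T|.-1; last exact: within_full.
  by rewrite mem_iota; lia.
by rewrite has_find size_iota in Hh.
Qed.

Lemma dist_min n u v : within e n u v -> dist e u v <= n.
Proof.
move=> H; case: (ltnP n #|T|) => Hn; last by have := dist_lt u v; lia.
rewrite leqNgt; apply/negP => Hlt.
have := before_find 0 Hlt; rewrite nth_iota // add0n H //.
Qed.

Lemma dist_pathP n u v : (exists p : seq T, [/\ size p <= n, path e u p & last u p = v]) -> dist e u v <= n.
Proof. by move=> H; apply: dist_min; apply/withinP. Qed.

Lemma dist_path u v : exists p : seq T, [/\ size p <= dist e u v, path e u p & last u p = v].
Proof. apply/withinP; exact: dist_within. Qed.

Lemma dist_tri a b c : dist e a b <= dist e a c + dist e c b.
Proof.
have [p [Hs Hp Hl]] := dist_path a c.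
have [q [Hs' Hq Hl']] := dist_path c b.
apply: dist_pathP; exists (p ++ q); split.
- by rewrite size_cat; lia.
- by rewrite cat_path Hp Hl Hq.
- by rewrite last_cat Hl Hl'.
Qed.

Lemma rev_walk u p : path e u p -> exists q : seq T, [/\ size q = size p, path e (last u p) q & last (last u p) q = u].
Proof.
elim: p u => [|a p IH] u /=; first by move=> _; exists [::].
move=> /andP [Hua Hp]; have [q [Hs Hq Hl]] := IH a Hp.
exists (rcons q u); split.
- by rewrite size_rcons Hs.
- by rewrite rcons_path Hq Hl Hsym.
- by rewrite last_rcons.
Qed.

Lemma dist_sym u v : dist e u v = dist e v u.
Proof.
suff H : forall a b, dist e a b <= dist e b a by apply/eqP; rewrite eqn_leq !H.
move=> a b; have [p [Hs Hp Hl]] := dist_path b a.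
have [q [Hs' Hq Hl']] := rev_walk Hp.
apply: dist_pathP; exists q; split; first by lia.
  by rewrite -Hl. by rewrite -Hl.
Qed.

Lemma dist_split a b k : k <= dist e a b -> exists w, dist e a w <= k /\ dist e w b <= dist e a b - k.
Proof.
move=> Hk; have [p [Hs Hp Hl]] := dist_path a b.
exists (last a (take k p)); split.
- apply: dist_pathP; exists (take k p); split => //.
  + by rewrite size_take; case: ifP; lia.
  + exact: take_path.
- apply: dist_pathP; exists (drop k p); split.
  + by rewrite size_drop; lia.
  + by move: Hp; rewrite -{1}(cat_take_drop k p) cat_path => /andP [].
  + by rewrite -Hl -last_cat cat_take_drop.
Qed.

End D.

Lemma geo (T : finType) (e : rel T) (S : {set T}) c a b :
  symmetric e -> (forall u v : T, connect e u v) ->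
  condorcet_winner e S c -> a \in S -> b \in S -> #|S :\ a :\ b| <= 1 ->
  dist e a c + dist e c b = dist e a b.
Proof.
move=> Hsym Hcon Hcw Ha Hb Hcard.
have Ht := dist_tri Hcon a b c.
apply/eqP; rewrite eqn_leq Ht andbT leqNgt; apply/negP => Hlt.
have Hk : minn (dist e a c) (dist e a b) <= dist e a b by apply: geq_minr.
have [w [Hw1 Hw2]] := dist_split Hcon Hk.
have Hbw : dist e b w <= dist e b c.
  rewrite (dist_sym Hsym Hcon b w) (dist_sym Hsym Hcon b c).
  have := dist_tri Hcon a b c; lia.
have Hwc : w != c.
  apply/negP => /eqP E; subst w.
  lia.
have H := Hcw w Hwc.
have H1 : #|[set u in S | dist e u c < dist e u w]| <= 1.
  apply: leq_trans Hcard; apply: subset_leq_card; apply/subsetP => u.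
  rewrite !inE => /andP [Hu Hlt']; rewrite Hu andbT.
  apply/andP; split; apply/negP => /eqP E; subst u; lia.
have H2 : 0 < #|[set u in S | dist e u w < dist e u c]|.
  apply/card_gt0P.
  case: (ltnP (dist e a w) (dist e a c)) => Ha'.
    by exists a; rewrite inE Ha Ha'.
  exists b; rewrite inE Hb /=.
  rewrite (dist_sym Hsym Hcon b w) (dist_sym Hsym Hcon b c).
  have := dist_tri Hcon a b c; lia.
lia.
Qed.

Theorem lemmaE2 (T : finType) (e : rel T) (x y z c : T) :
  simple_graph e -> connected_graph e ->
  condorcet_winner e [set x; y; z] c ->
  gen_median e x y z c /\ (forall u : T, gen_median e x y z u -> u = c).
Proof.
move=> [Hsym _] Hcon Hcw.
have Hx : x \in [set x; y; z] by rewrite !inE eqxx.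
have Hy : y \in [set x; y; z] by rewrite !inE eqxx !orbT.
have Hz : z \in [set x; y; z] by rewrite !inE eqxx !orbT.
have C2 : forall a b w, a \in [set x; y; z] -> b \in [set x; y; z] ->
    [set x; y; z] :\ a :\ b \subset [set w] -> #|[set x; y; z] :\ a :\ b| <= 1.
  by move=> a b w _ _ Hs; rewrite -(cards1 w); apply: subset_leq_card.
have Gxy := geo Hsym Hcon Hcw Hx Hy (C2 _ _ z Hx Hy _).
have Gxz := geo Hsym Hcon Hcw Hx Hz (C2 _ _ y Hx Hz _).
have Gyz := geo Hsym Hcon Hcw Hy Hz (C2 _ _ x Hy Hz _).
have S1 : [set x; y; z] :\ x :\ y \subset [set z].
  by apply/subsetP => u; rewrite !inE; case: (u == x); case: (u == y); case: (u == z).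
have S2 : [set x; y; z] :\ x :\ z \subset [set y].
  by apply/subsetP => u; rewrite !inE; case: (u == x); case: (u == y); case: (u == z).
have S3 : [set x; y; z] :\ y :\ z \subset [set x].
  by apply/subsetP => u; rewrite !inE; case: (u == x); case: (u == y); case: (u == z).
move: (Gxy S1) (Gxz S2) (Gyz S3) => {Gxy Gxz Gyz} Gxy Gxz Gyz.
have sy := dist_sym Hsym Hcon.
have tri := dist_tri Hcon.
have Low : forall w, dist e x y + dist e x z + dist e y z <= 2 * median_cost e x y z w.
  move=> w; rewrite /median_cost.
  have := tri x y w; have := tri x z w; have := tri y z w.
  rewrite (sy x w) (sy y w); lia.
have Cc : 2 * median_cost e x y z c = dist e x y + dist e x z + dist e y z.
  rewrite /median_cost (sy c x) (sy c y) (sy c z) -Gxy -Gxz -Gyz.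
  rewrite (sy c y) (sy c z); lia.
split.
  move=> w; have := Low w; lia.
move=> u Hu; apply/eqP; apply/negP => Hne.
have Hc := Hu c.
have Lu := Low u.
have := tri x y u; have := tri x z u; have := tri y z u.
rewrite /median_cost in Hc Lu Cc.
rewrite (sy u x) (sy u y) (sy u z) (sy c x) (sy c y) (sy c z) in Hc Lu Cc.
move: Gxy Gxz Gyz; rewrite (sy c y) (sy c z) => Gxy Gxz Gyz.
rewrite (sy u z) (sy u y) => T1 T2 T3.
have Ex : dist e x u = dist e x c by lia.
have Ey : dist e y u = dist e y c by lia.
have Ez : dist e z u = dist e z c by lia.
have := Hcw u (introT negP Hne).
have -> : [set v in [set x; y; z] | dist e v c < dist e v u] = set0.
  apply/setP => v; rewrite !inE.
  case: (eqVneq v x) => [->|_]; first by rewrite Ex ltnn andbF.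
  case: (eqVneq v y) => [->|_]; first by rewrite Ey ltnn andbF.
  case: (eqVneq v z) => [->|_]; first by rewrite Ez ltnn andbF.
  by [].
by rewrite cards0.
Qed.
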